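(* Let $\rho\in\mathcal{X}_2$, i.e. $\rho$ is an $\mathrm{SL}(2,\mathbb{C})$ character of the one-holed torus with $\mathrm{tr}\,\rho(XYX^{-1}Y^{-1})=2$. Then either $\mathcal{E}(\rho)=\{X_0\}$ for a single element $X_0\in\mathscr{PL}$, or $\mathcal{E}(\rho)=\mathscr{PL}$. Furthermore, in the first case, if $X_0\in\mathscr{C}$ then $\mathrm{tr}\,\rho(X_0)\in[-2,2]$ and $\mathrm{tr}\,\rho(X)\notin[-2,2]$ for all $X\in\mathscr{C}\setminus\{X_0\}$, while if $X_0\notin\mathscr{C}$ then $\mathrm{tr}\,\rho(X)\notin[-2,2]$ for all $X\in\mathscr{C}$; and in the second case $\mathrm{tr}\,\rho(X)\in[-2,2]$ for all $X\in\mathscr{C}$.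
   Context: $T$ is the one-holed torus; $\pi=\pi_1(T)$ is free on generators $X,Y$. The character variety is $\mathcal{X}=\mathrm{Hom}(\pi,\mathrm{SL}(2,\mathbb{C}))/\!/\mathrm{SL}(2,\mathbb{C})$, identified with $\mathbb{C}^3$ via $\rho\mapsto(\mathrm{tr}\,\rho(X),\mathrm{tr}\,\rho(Y),\mathrm{tr}\,\rho(XY))$. For $\kappa\in\mathbb{C}$, $\mathcal{X}_\kappa=\{\rho:\mathrm{tr}\,\rho(XYX^{-1}Y^{-1})=\kappa\}$ (independent of the choice of free generators); it is the set of $(x,y,z)$ with $x^2+y^2+z^2-xyz-2=\kappa$. $\mathscr{C}$ is the set of free homotopy classes of essential (non-trivial, non-boundary-parallel) simple closed curves on $T$; $\mathrm{tr}\,\rho(W)$ is well defined for $W\in\mathscr{C}$. $\mathscr{PL}$ is the projective lamination space of $T$, identified with $\hat{\mathbb{R}}$ so that $\mathscr{C}$ corresponds to $\hat{\mathbb{Q}}$, with the topology of $\hat{\mathbb R}$. $\Lambda\in\mathscr{PL}$ is an end invariant of $\rho$ if there exist $K>0$ and distinct $X_n\in\mathscr{C}$ with $X_n\to\Lambda$ and $|\mathrm{tr}\,\rho(X_n)|<K$ for all $n$; $\mathcal{E}(\rho)$ is the set of end invariants. *)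

(* Defs.v *)
From HB Require Import structures.
From mathcomp Require Import all_boot all_order all_algebra.
From mathcomp Require Import complex reals.
Set Implicit Arguments. Unset Strict Implicit. Unset Printing Implicit Defensive.
Import Order.TTheory GRing.Theory Num.Theory.
Local Open Scope ring_scope.

Section OneHoledTorus.
Variable R : realType.
Local Notation C := (R[i]).

(* A representation rho : pi = <X,Y> -> SL(2,C) is given by the pair
   (A, B) = (rho X, rho Y) of 2x2 complex matrices of determinant 1. *)
Definition is_SL2 (A : 'M[C]_2) : Prop := \det A = 1.

Definition comm_trace (A B : 'M[C]_2) : C :=
  \tr (A *m B *m invmx A *m invmx B).

(* Essential simple closed curves on T <-> Q^ = option rat.
   The slope  Some (p/q)  (q > 0, gcd(p,q)=1) is the free homotopy class of
   the primitive element with abelianization q X + p Y, represented by the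
   Christoffel word with q letters X and |p| letters Y^(sign p);
   None (slope infinity) is the class of Y. *)
Definition curve := option rat.

(* i-th letter (0 <= i < n = q + m) of the Christoffel word with
   m letters "Y" and n - m letters "X": it is "Y" iff
   floor((i+1) m / n) <> floor(i m / n). *)
Definition christoffel_Y (n m i : nat) : bool := (((i.+1 * m) %/ n) != ((i * m) %/ n))%N.

Definition curve_mat (A B : 'M[C]_2) (c : curve) : 'M[C]_2 :=
  match c with
  | None => B
  | Some q =>
      let a := `|denq q|%N in
      let m := `|numq q|%N in
      let Bs := if numq q < 0 then invmx B else B in
      \prod_(i < a + m) (if christoffel_Y (a + m) m i then Bs else A)
  end.

Definition trc (A B : 'M[C]_2) (c : curve) : C := \tr (curve_mat A B c).

(* PL(T) identified with R^ = option R (None = infinity);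
   the curve of slope q in Q^ is the point q of R^. *)
Definition PL := option R.
Definition curve_to_PL (c : curve) : PL :=
  match c with None => None | Some q => Some (ratr q) end.

Definition cvg_hat (s : nat -> PL) (L : PL) : Prop :=
  match L with
  | Some r => forall e : R, 0 < e -> exists N : nat, forall n : nat, (N <= n)%N ->
                exists x : R, s n = Some x /\ `|x - r| < e
  | None => forall M : R, exists N : nat, forall n : nat, (N <= n)%N ->
                forall x : R, s n = Some x -> M < `|x|
  end.

Definition end_invariant (A B : 'M[C]_2) (L : PL) : Prop :=
  exists K : R, 0 < K /\
  exists X : nat -> curve, injective X /\
    cvg_hat (fun n => curve_to_PL (X n)) L /\
    forall n : nat, ComplexField.Normc.normc (trc A B (X n)) < K.

Definition in_m22 (t : C) : Prop := Im t = 0 /\ -2 <= Re t <= 2.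

End OneHoledTorus.
Arguments curve_to_PL {R} c.

(* Main.v *)
Require Import Defs.
From HB Require Import structures.
From mathcomp Require Import all_boot all_order all_algebra.
From mathcomp Require Import complex reals.
From mathcomp Require Import sequences exp.
From mathcomp Require Import ring lra zify.
Import Order.TTheory GRing.Theory Num.Theory.
Local Open Scope ring_scope.

Set Implicit Arguments. Unset Strict Implicit. Unset Printing Implicit Defensive.

Section Alg.
Variable F : fieldType.

Lemma ord2_cases (j : 'I_2) : j = 0 \/ j = 1.
Proof. case: j => [[|[|//]]] H; [left|right]; exact: val_inj. Qed.

Lemma sum2 (G : 'I_2 -> F) : \sum_(i < 2) G i = G 0 + G 1.
Proof.
rewrite !big_ord_recl big_ord0 addr0.
have -> : lift ord0 ord0 = 1 :> 'I_2 by apply: val_inj.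
by [].
Qed.

Lemma lift00 : lift 0 0 = 1 :> 'I_2. Proof. exact: val_inj. Qed.
Lemma lift10 : lift 1 0 = 0 :> 'I_2. Proof. exact: val_inj. Qed.

Lemma mul22 (A B : 'M[F]_2) i j : (A *m B) i j = A i 0 * B 0 j + A i 1 * B 1 j.
Proof. by rewrite mxE sum2. Qed.

Lemma rmul2 (w : 'rV[F]_2) (B : 'M[F]_2) j : (w *m B) 0 j = w 0 0 * B 0 j + w 0 1 * B 1 j.
Proof. by rewrite mxE sum2. Qed.

Lemma tr22 (A : 'M[F]_2) : \tr A = A 0 0 + A 1 1.
Proof. by rewrite /mxtrace sum2. Qed.

Lemma det22 (A : 'M[F]_2) : \det A = A 0 0 * A 1 1 - A 0 1 * A 1 0.
Proof.
rewrite (expand_det_row A 0) sum2 /cofactor !det_mx11 !mxE /=.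
have -> : lift 0 0 = 1 :> 'I_2 by apply: val_inj.
have -> : lift 1 0 = 0 :> 'I_2 by apply: val_inj.
rewrite expr0 expr1; ring.
Qed.

Lemma adj22 (A : 'M[F]_2) i j : \adj A i j =
  if (i == 0) && (j == 0) then A 1 1 else if (i == 1) && (j == 1) then A 0 0
  else - A i j.
Proof.
rewrite mxE /cofactor det_mx11 !mxE.
case: (ord2_cases i) => ->; case: (ord2_cases j) => -> /=.
all: rewrite ?lift00 ?lift10 /=; ring.
Qed.

Lemma row2P (v w : 'rV[F]_2) : v 0 0 = w 0 0 -> v 0 1 = w 0 1 -> v = w.
Proof.
move=> h0 h1; apply/rowP => j; case: (ord2_cases j) => ->; by rewrite ?h0 ?h1 ?mxE.
Qed.
End Alg.

Section Eig.
Variable F : fieldType.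
Implicit Types A B : 'M[F]_2.

Definition mkrow (x y : F) : 'rV[F]_2 := \row_(j < 2) (if j == 0 then x else y).
Lemma mkrow0 x y : mkrow x y 0 0 = x. Proof. by rewrite mxE. Qed.
Lemma mkrow1 x y : mkrow x y 0 1 = y. Proof. by rewrite mxE. Qed.

Lemma row_neq0 (w : 'rV[F]_2) : w != 0 -> w 0 0 != 0 \/ w 0 1 != 0.
Proof.
move=> hw; case: (eqVneq (w 0 0) 0) => h0; last by left.
case: (eqVneq (w 0 1) 0) => h1; last by right.
have E : w = 0 by apply: row2P; rewrite ?h0 ?h1 mxE.
by rewrite E eqxx in hw.
Qed.

Lemma mkrow_neq0 x y : x != 0 \/ y != 0 -> mkrow x y != 0.
Proof.
move=> h; apply/eqP => E; case: h => /eqP; apply.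
  by rewrite -(mkrow0 x y) E mxE.
by rewrite -(mkrow1 x y) E mxE.
Qed.

Lemma prop2 (w v : 'rV[F]_2) : w != 0 -> w 0 0 * v 0 1 = w 0 1 * v 0 0 ->
  exists c, v = c *: w.
Proof.
move=> hw E; case: (eqVneq (w 0 0) 0) => h0.
  have h1 : w 0 1 != 0 by case: (row_neq0 hw) => //; rewrite h0 eqxx.
  exists (v 0 1 / w 0 1); apply: row2P; rewrite !mxE.
    rewrite h0 mulr0; move: E; rewrite h0 mul0r => /esym/eqP.
    by rewrite mulf_eq0 (negbTE h1) /= => /eqP.
  by rewrite divfK.
exists (v 0 0 / w 0 0); apply: row2P; rewrite !mxE; first by rewrite divfK.
by apply: (mulfI h0); rewrite E; field.
Qed.

Lemma inv_adj A : \det A = 1 -> invmx A = \adj A.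
Proof. by move=> h; rewrite /invmx unitmxE h unitr1 invr1 scale1r. Qed.

Ltac ex22 := rewrite ?det22 ?tr22; do 4 rewrite ?mul22 ?rmul2 ?adj22 ?mkrow0 ?mkrow1 ?mxE ?sum2 /=.

Lemma comm_detK A B : \det A = 1 -> \det B = 1 ->
  \tr (A *m B *m invmx A *m invmx B) = 2 -> \det (A *m B - B *m A) = 0.
Proof.
move=> hA hB; rewrite !inv_adj // => ht.
have E : \det (A *m B - B *m A) = 2 * \det A * \det B - \tr (A *m B *m \adj A *m \adj B).
  by ex22; ring.
by rewrite E ht hA hB; ring.
Qed.

Lemma eigrow (w : 'rV[F]_2) M c d : w != 0 ->
  w 0 0 * (w *m M) 0 1 - w 0 1 * (w *m M) 0 0 = c * d -> d = 0 ->
  exists l, w *m M = l *: w.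
Proof.
move=> hw E hd; apply: prop2 => //; apply/eqP; rewrite -subr_eq0; apply/eqP.
by rewrite E hd mulr0.
Qed.

Lemma eig_K A B : \det (A *m B - B *m A) = 0 -> A *m B - B *m A != 0 ->
  exists w : 'rV[F]_2, w != 0 /\ (exists l, w *m A = l *: w) /\ (exists m, w *m B = m *: w).
Proof.
set K := A *m B - B *m A => hK hK0.
case: (eqVneq (row 0 K) 0) => h0; last first.
  exists (row 0 K); split => //; split.
    by apply: (eigrow (c := - A 0 1) h0 _ hK); rewrite /K; ex22; ring.
  by apply: (eigrow (c := - B 0 1) h0 _ hK); rewrite /K; ex22; ring.
case: (eqVneq (row 1 K) 0) => h1; last first.
  exists (row 1 K); split => //; split.
    by apply: (eigrow (c := A 1 0) h1 _ hK); rewrite /K; ex22; ring.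
  by apply: (eigrow (c := B 1 0) h1 _ hK); rewrite /K; ex22; ring.
case/eqP: hK0; apply/matrixP => i j.
case: (ord2_cases i) => ->.
  by have := congr1 (fun M : 'rV_2 => M 0 j) h0; rewrite !mxE.
by have := congr1 (fun M : 'rV_2 => M 0 j) h1; rewrite !mxE.
Qed.

Lemma ring_hyp (x y c1 c2 c3 c4 p1 p2 p3 p4 : F) :
  x - y = c1 * p1 + c2 * p2 + c3 * p3 + c4 * p4 ->
  p1 = 0 -> p2 = 0 -> p3 = 0 -> p4 = 0 -> x = y.
Proof.
move=> E h1 h2 h3 h4; apply/eqP; rewrite -subr_eq0 E h1 h2 h3 h4; apply/eqP; ring.
Qed.

Lemma eig_comm_ns A B l : \det A = 1 -> l ^+ 2 - \tr A * l + 1 = 0 ->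
  A *m B = B *m A ->
  (mkrow (A 1 1 - l) (- A 0 1) != 0 \/ mkrow (- A 1 0) (A 0 0 - l) != 0) ->
  exists w : 'rV[F]_2, w != 0 /\ (exists l, w *m A = l *: w) /\ (exists m, w *m B = m *: w).
Proof.
move=> hA hl hAB hw.
have hD : A 0 0 * A 1 1 - A 0 1 * A 1 0 - 1 = 0 by rewrite -det22 hA subrr.
have hP : l ^+ 2 - (A 0 0 + A 1 1) * l + 1 = 0 by rewrite -tr22.
have hK : forall i j, (A 0 0 * B 0 1 + A 0 1 * B 1 1) * 0 + 
   ((A i 0 * B 0 j + A i 1 * B 1 j) - (B i 0 * A 0 j + B i 1 * A 1 j)) = 0.
  move=> i j; rewrite mulr0 add0r -!mul22 hAB subrr //.
have hK01 := hK 0 1; have hK11 := hK 1 1; have hK10 := hK 1 0.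
rewrite mulr0 add0r in hK01; rewrite mulr0 add0r in hK11; rewrite mulr0 add0r in hK10.
case: hw => hw.
  exists (mkrow (A 1 1 - l) (- A 0 1)); split => //; split.
    exists l; apply: row2P; rewrite ?rmul2 ?mkrow0 ?mkrow1 ?mxE /=.
      by apply: (ring_hyp (c1 := 1) (c2 := 1) (c3 := 0) (c4 := 0) _ hP hD hP hP); ring.
    by apply: (ring_hyp (c1 := 0) (c2 := 0) (c3 := 0) (c4 := 0) _ hP hD hP hP); ring.
  apply: prop2 => //; rewrite ?rmul2 ?mkrow0 ?mkrow1.
  apply: (ring_hyp (c1 := B 0 1) (c2 := B 0 1) (c3 := A 0 1) (c4 := - (A 1 1 - l)) _ hP hD hK11 hK01); ring.
exists (mkrow (- A 1 0) (A 0 0 - l)); split => //; split.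
  exists l; apply: row2P; rewrite ?rmul2 ?mkrow0 ?mkrow1 ?mxE /=.
    by apply: (ring_hyp (c1 := 0) (c2 := 0) (c3 := 0) (c4 := 0) _ hP hD hP hP); ring.
  by apply: (ring_hyp (c1 := 1) (c2 := 1) (c3 := 0) (c4 := 0) _ hP hD hP hP); ring.
apply: prop2 => //; rewrite ?rmul2 ?mkrow0 ?mkrow1.
by apply: (ring_hyp (c1 := - B 1 0) (c2 := - B 1 0) (c3 := A 1 0) (c4 := A 0 0 - l) _ hP hD hK11 hK10); ring.
Qed.

End Eig.

Section Closed.
Variable F : closedFieldType.
Implicit Types A B : 'M[F]_2.

Lemma quad_root (t : F) : exists l : F, l ^+ 2 - t * l + 1 = 0.
Proof.
have [x hx] := @GRing.solve_monicpoly F 2 (fun i => if i == 0%N then -1 else t) isT.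
exists x; rewrite hx sum2 /= expr0 expr1; ring.
Qed.

Lemma mkrow_eq0 (x y : F) : mkrow x y = 0 -> x = 0 /\ y = 0.
Proof.
move=> E; split; [rewrite -(mkrow0 x y) | rewrite -(mkrow1 x y)]; by rewrite E mxE.
Qed.

Lemma common_eig A B : \det A = 1 -> \det B = 1 ->
  \tr (A *m B *m invmx A *m invmx B) = 2 ->
  exists w : 'rV[F]_2, w != 0 /\ (exists l, w *m A = l *: w) /\ (exists m, w *m B = m *: w).
Proof.
move=> hA hB ht; have hK := comm_detK hA hB ht.
case: (eqVneq (A *m B - B *m A) 0) => hK0; last exact: eig_K.
have hAB : A *m B = B *m A by apply/eqP; rewrite -subr_eq0 hK0.
have [l hl] := quad_root (\tr A).
case: (eqVneq (mkrow (A 1 1 - l) (- A 0 1)) 0) => h1; last exact: (eig_comm_ns hA hl hAB (or_introl h1)).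
case: (eqVneq (mkrow (- A 1 0) (A 0 0 - l)) 0) => h2; last exact: (eig_comm_ns hA hl hAB (or_intror h2)).
have [m hm] := quad_root (\tr B).
case: (eqVneq (mkrow (B 1 1 - m) (- B 0 1)) 0) => h3.
  case: (eqVneq (mkrow (- B 1 0) (B 0 0 - m)) 0) => h4.
    move/mkrow_eq0: h1 => [h11 h12]; move/mkrow_eq0: h2 => [h21 h22].
    move/mkrow_eq0: h3 => [h31 h32]; move/mkrow_eq0: h4 => [h41 h42].
    exists (mkrow 1 0); split; first exact: (mkrow_neq0 (or_introl (oner_neq0 F))).
    split; [exists l | exists m]; apply: row2P; rewrite ?rmul2 ?mkrow0 ?mkrow1 ?mxE /=.
    - by move/eqP: h22; rewrite subr_eq0 => /eqP ->; ring.
    - by move/eqP: h12; rewrite oppr_eq0 => /eqP ->; ring.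
    - by move/eqP: h42; rewrite subr_eq0 => /eqP ->; ring.
    - by move/eqP: h32; rewrite oppr_eq0 => /eqP ->; ring.
  have [w [hw [[m' hm'] [l' hl']]]] := eig_comm_ns hB hm (esym hAB) (or_intror h4).
  by exists w; split => //; split; [exists l' | exists m'].
have [w [hw [[m' hm'] [l' hl']]]] := eig_comm_ns hB hm (esym hAB) (or_introl h3).
by exists w; split => //; split; [exists l' | exists m'].
Qed.

End Closed.

Section Cur.
Variable F : fieldType.

Lemma christ_facts n m k : (m <= n)%N -> (0 < n)%N ->
  [/\ (k * m %/ n <= k)%N, (k * m %/ n <= k.+1 * m %/ n)%N &
      (k.+1 * m %/ n <= (k * m %/ n).+1)%N].
Proof.
move=> hmn hn; split.
- have : (k * m %/ n <= k * n %/ n)%N by apply: leq_div2r; rewrite leq_mul2l hmn orbT.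
  by rewrite mulnK.
- by apply: leq_div2r; rewrite leq_mul2r leqnSn orbT.
- have : (k.+1 * m %/ n <= (n + k * m) %/ n)%N.
    by apply: leq_div2r; rewrite mulSn; lia.
  by rewrite divnDl // divnn hn add1n.
Qed.

Lemma prod_christ n m (x y : F) : (m <= n)%N -> (0 < n)%N ->
  \prod_(i < n) (if christoffel_Y n m i then x else y) = x ^+ m * y ^+ (n - m).
Proof.
move=> hmn hn.
have gen : forall k, \prod_(i < k) (if christoffel_Y n m i then x else y) =
   x ^+ (k * m %/ n) * y ^+ (k - k * m %/ n).
  elim=> [|k IH]; first by rewrite big_ord0 mul0n div0n expr0 mul1r.
  rewrite big_ord_recr /= IH /christoffel_Y.
  have [h1 h2 h3] := christ_facts k hmn hn.
  case: eqP => E.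
    rewrite E /=; have -> : (k.+1 - k * m %/ n = (k - k * m %/ n).+1)%N by lia.
    by rewrite exprS; ring.
  have -> : (k.+1 * m %/ n = (k * m %/ n).+1)%N by lia.
  have -> : (k.+1 - (k * m %/ n).+1 = (k - k * m %/ n))%N by lia.
  by rewrite /= exprS; ring.
by rewrite gen mulKn.
Qed.

End Cur.

Section CurveEig.
Variable R : realType.
Local Notation C := (R[i]).
Implicit Types (M W : 'M[C]_2) (w : 'rV[C]_2).

Lemma unit_det1 M : \det M = 1 -> M \in unitmx.
Proof. by move=> h; rewrite unitmxE h unitr1. Qed.

Lemma eig_nz M w x : w != 0 -> w *m M = x *: w -> \det M = 1 -> x != 0.
Proof.
move=> hw E hM; apply/eqP => x0; move/eqP: hw; apply.
by rewrite -(mulmxK (unit_det1 hM) w) E x0 scale0r mul0mx.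
Qed.

Lemma eig_inv M w x : w *m M = x *: w -> \det M = 1 -> x != 0 ->
  w *m invmx M = x^-1 *: w.
Proof.
move=> E hM hx.
have : w *m M *m invmx M = w by rewrite mulmxK // unit_det1.
rewrite E -scalemxAl => E2.
by rewrite -{2}E2 scalerA mulVf // scale1r.
Qed.

Lemma eig_prod w n (G : 'I_n -> 'M[C]_2) (g : 'I_n -> C) :
  (forall i, w *m G i = g i *: w) -> w *m (\prod_i G i) = (\prod_i g i) *: w.
Proof.
elim: n G g => [|n IH] G g hG.
  by rewrite !big_ord0 mulmx1 scale1r.
rewrite !big_ord_recr /= -mulmxE mulmxA (IH _ (fun i => g (widen_ord (leqnSn n) i))) //.
by rewrite -scalemxAl hG scalerA.
Qed.

Lemma det_prod1 n (G : 'I_n -> 'M[C]_2) :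
  (forall i, \det (G i) = 1) -> \det (\prod_i G i) = 1.
Proof.
move=> hG; apply: (big_ind (fun M : 'M[C]_2 => \det M = 1)).
- by rewrite det1.
- by move=> X Y hX hY; rewrite -mulmxE det_mulmx hX hY mulr1.
- by move=> i _; apply: hG.
Qed.

Definition nu (l m : C) (c : curve) : C :=
  match c with
  | None => m
  | Some q => l ^+ `|denq q|%N * (if numq q < 0 then m^-1 else m) ^+ `|numq q|%N
  end.

Lemma curve_facts A B w l m : \det A = 1 -> \det B = 1 -> w != 0 ->
  w *m A = l *: w -> w *m B = m *: w -> forall c,
  w *m curve_mat A B c = nu l m c *: w /\ \det (curve_mat A B c) = 1.
Proof.
move=> hA hB hw hl hm [q|] /=; last by [].
have hm0 := eig_nz hw hm hB.
set Bs := if numq q < 0 then invmx B else B.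
have hBs : w *m Bs = (if numq q < 0 then m^-1 else m) *: w.
  by rewrite /Bs; case: ifP => _ //; apply: eig_inv.
have hdBs : \det Bs = 1 by rewrite /Bs; case: ifP => _ //; rewrite det_inv hB invr1.
split; last by apply: det_prod1 => i; case: ifP.
rewrite (eig_prod (g := fun i : 'I_(_) => if christoffel_Y (`|denq q| + `|numq q|) `|numq q| i
     then (if numq q < 0 then m^-1 else m) else l)); last by move=> i; case: ifP.
rewrite prod_christ ?leq_addl //; last first.
  by rewrite addn_gt0 absz_gt0 denq_neq0.
by rewrite addnK mulrC.
Qed.

Lemma trace_eig W w x : w != 0 -> w *m W = x *: w -> \det W = 1 ->
  \tr W = x + x^-1.
Proof.
move=> hw E hW.
have hx := eig_nz hw E hW.
have e0 : w 0 0 * W 0 0 + w 0 1 * W 1 0 - x * w 0 0 = 0.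
  by move: (congr1 (fun v : 'rV_2 => v 0 0) E); rewrite rmul2 mxE => ->; ring.
have e1 : w 0 0 * W 0 1 + w 0 1 * W 1 1 - x * w 0 1 = 0.
  by move: (congr1 (fun v : 'rV_2 => v 0 1) E); rewrite rmul2 mxE => ->; ring.
have hd : W 0 0 * W 1 1 - W 0 1 * W 1 0 - 1 = 0 by rewrite -det22 hW subrr.
have hP : x ^+ 2 - \tr W * x + 1 = 0.
  rewrite tr22; case: (row_neq0 hw) => hj.
    apply: (mulIf hj); rewrite mul0r.
    by apply: (ring_hyp (c1 := W 1 1 - x) (c2 := - W 1 0) (c3 := - w 0 0) (c4 := 0) _ e0 e1 hd hd); ring.
  apply: (mulIf hj); rewrite mul0r.
  by apply: (ring_hyp (c1 := - W 0 1) (c2 := W 0 0 - x) (c3 := - w 0 1) (c4 := 0) _ e0 e1 hd hd); ring.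
apply: (mulIf hx); rewrite mulrDl mulVf //.
by apply/eqP; rewrite -subr_eq0 -oppr_eq0; apply/eqP; rewrite -[RHS]hP; ring.
Qed.

End CurveEig.

Section Ana.
Variable R : realType.
Local Notation C := (R[i]).
Local Notation nc := (@ComplexField.Normc.normc R).

Lemma in_m22E (t : C) : in_m22 t <-> complex.Im t = 0 /\ -2 <= complex.Re t <= 2.
Proof.
rewrite /in_m22 -complexIm -complexRe.
have h2 : (-2 : C) = ((-2 : R)%:C)%C by rewrite rmorphN rmorph_nat.
have h3 : (2 : C) = ((2 : R)%:C)%C by rewrite rmorph_nat.
rewrite h2 h3 !lecR; split; case=> [h1 h4]; split => //.
  by move: h1 => [].
by rewrite h1.
Qed.

Lemma nc_ge0 (z : C) : 0 <= nc z.
Proof. by case: z => a b; rewrite /= sqrtr_ge0. Qed.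

Lemma nc_gt0 (z : C) : z != 0 -> 0 < nc z.
Proof.
move=> hz; rewrite lt_def nc_ge0 andbT; apply/eqP => /ComplexField.Normc.eq0_normc.
by apply/eqP.
Qed.

Lemma ncX (z : C) n : nc (z ^+ n) = nc z ^+ n.
Proof.
elim: n => [|n IH]; first by rewrite !expr0 ComplexField.Normc.normc1.
by rewrite !exprS ComplexField.Normc.normcM IH.
Qed.

Lemma m22_iff (x : C) : x != 0 -> in_m22 (x + x^-1) <-> nc x = 1.
Proof.
case: x => a b hx; rewrite in_m22E.
have hn : 0 < a ^+ 2 + b ^+ 2.
  have := nc_gt0 hx; rewrite /= sqrtr_gt0 //.
have hnc : nc (a +i* b)%C = Num.sqrt (a ^+ 2 + b ^+ 2) by [].
rewrite hnc; simpc.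
have sq1 : (Num.sqrt (a ^+ 2 + b ^+ 2) = 1) <-> (a ^+ 2 + b ^+ 2 = 1).
  split => [h|->]; last by rewrite sqrtr1.
  by rewrite -(sqr_sqrtr (ltW hn)) h expr1n.
rewrite sq1; split; last first.
  move=> h1; rewrite h1 /= !divr1 subrr; split => //.
  by apply/andP; split; nra.
rewrite /=; case=> hIm /andP [hl hr].
set n := a ^+ 2 + b ^+ 2 in hn hIm hl hr *.
have hn0 : n != 0 by rewrite gt_eqF.
have : b * (n - 1) = 0.
  have -> : b * (n - 1) = n * (b - b / n) by field.
  by rewrite hIm mulr0.
move/eqP; rewrite mulf_eq0 => /orP [/eqP b0|]; last by rewrite subr_eq0 => /eqP.
rewrite /n b0 expr0n /= addr0 in hl hr hn0 hn *.
set t := a + a / a ^+ 2 in hl hr.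
have ha : a != 0 by apply: contraNneq hn0 => ->; rewrite expr0n.
have Et : t * a = a ^+ 2 + 1 by rewrite /t; field.
have : (a ^+ 2 - 1) ^+ 2 <= 0.
  have -> : (a ^+ 2 - 1) ^+ 2 = (t * a) ^+ 2 - 4 * a ^+ 2 by rewrite Et; ring.
  have -> : (t * a) ^+ 2 - 4 * a ^+ 2 = - (a ^+ 2 * ((2 - t) * (2 + t))) by ring.
  by rewrite oppr_le0; apply: mulr_ge0; [exact: sqr_ge0 | apply: mulr_ge0; lra].
rewrite le_eqVlt ltNge sqr_ge0 orbF sqrf_eq0 subr_eq0 => /eqP; done.
Qed.

Lemma nc_tri (x y : C) : nc x <= nc (x + y) + nc y.
Proof.
have := @le_normcD R (x + y) (- y); rewrite addrK.
by rewrite (@normcN R y).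
Qed.

Lemma lnK' (x : R) : 0 < x -> expR (ln x) = x.
Proof. by move=> hx; rewrite lnK // posrE. Qed.

Lemma tr_bound_lo (x : C) K : x != 0 -> nc (x + x^-1) < K -> `|ln (nc x)| < ln (K + 1).
Proof.
move=> hx hK.
have hr := nc_gt0 hx; set r := nc x in hr *.
have hV : nc x^-1 = r^-1 by rewrite ComplexField.Normc.normcV.
have hK0 : 0 < K by apply: le_lt_trans hK; apply: nc_ge0.
have h1 : r <= nc (x + x^-1) + r^-1 by rewrite -hV; apply: nc_tri.
have h2 : r^-1 <= nc (x + x^-1) + r.
  by have := nc_tri x^-1 x; rewrite [x^-1 + x]addrC hV.
have hri : 0 < r^-1 by rewrite invr_gt0.
have hrr : r * r^-1 = 1 by rewrite mulfV // gt_eqF.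
have a1 : r < K + 1.
  case: (lerP r 1) => hr1; first lra.
  have : r^-1 < 1 by rewrite invf_lt1.
  lra.
have a2 : r^-1 < K + 1.
  case: (lerP r^-1 1) => hr1; first lra.
  have : r < 1 by rewrite -[r]invrK invf_lt1 ?invr_gt0.
  lra.
have hK1 : 0 < K + 1 by lra.
rewrite ltr_norml; apply/andP; split.
  by rewrite ltrNl -lnV ?posrE // ltr_ln ?posrE.
by rewrite ltr_ln ?posrE.
Qed.

Lemma tr_bound_hi (x : C) M : x != 0 -> `|ln (nc x)| <= M ->
  nc (x + x^-1) < 2 * expR M + 1.
Proof.
move=> hx hM.
have hr := nc_gt0 hx; set r := nc x in hr hM *.
have hV : nc x^-1 = r^-1 by rewrite ComplexField.Normc.normcV.
move: hM; rewrite ler_norml => /andP [h1 h2].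
have e1 : r <= expR M by rewrite -(lnK' hr) ler_expR.
have e2 : r^-1 <= expR M.
  by rewrite -(lnK' (x := r^-1)) ?invr_gt0 // ler_expR lnV ?posrE // lerNl.
have := @le_normcD R x x^-1; rewrite hV -/r => h.
have := expR_gt0 M; lra.
Qed.

End Ana.

Section Ana2.
Variable R : realType.
Local Notation C := (R[i]).
Local Notation nc := (@ComplexField.Normc.normc R).

Definition xv (la lb : R) (c : curve) : R :=
  match c with
  | None => lb
  | Some q => (denq q)%:~R * la + (numq q)%:~R * lb
  end.

Lemma ln_nc_nu (l m : C) c : l != 0 -> m != 0 ->
  ln (nc (nu l m c)) = xv (ln (nc l)) (ln (nc m)) c.
Proof.
move=> hl hm; case: c => [q|] //=.
have hr := nc_gt0 hl; have hs := nc_gt0 hm.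
have hms : (if numq q < 0 then m^-1 else m) != 0 by case: ifP => _; rewrite ?invr_eq0.
have hs' := nc_gt0 hms.
rewrite ComplexField.Normc.normcM !ncX lnM ?posrE ?exprn_gt0 // !lnXn //.
rewrite -[ln _ *+ `|denq q|%N]mulr_natr -[ln _ *+ `|numq q|%N]mulr_natr !natr_absz.
rewrite gtr0_norm ?denq_gt0 // [ln (nc l) * _]mulrC; congr (_ + _).
case: ifP => hn.
  rewrite ComplexField.Normc.normcV lnV ?posrE // ltr0_norm //.
  by rewrite mulrNz mulNr mulrN opprK mulrC.
rewrite ger0_norm; first by rewrite mulrC.
by rewrite leNgt hn.
Qed.

End Ana2.

Section Med.
Variable R : realType.
Variable r : R.

Definition fr (p q : int) : R := p%:~R / q%:~R.

Definition stT := (int * int * int * int)%type.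

Definition step (s : stT) : stT :=
  let: (p1, q1, p2, q2) := s in
  if fr (p1 + p2) (q1 + q2) <= r then (p1 + p2, q1 + q2, p2, q2)
  else (p1, q1, p1 + p2, q1 + q2).

Definition Inv (s : stT) : Prop :=
  let: (p1, q1, p2, q2) := s in
  [/\ 0 < q1, 0 < q2, p2 * q1 - p1 * q2 = 1 & fr p1 q1 <= r < fr p2 q2].

Definition init : stT := (Num.floor r, 1, Num.floor r + 1, 1).

Definition st n := iter n step init.

Definition lo (s : stT) := let: (p1, q1, p2, q2) := s in fr p1 q1.
Definition hi (s : stT) := let: (p1, q1, p2, q2) := s in fr p2 q2.
Definition mP (s : stT) := let: (p1, q1, p2, q2) := s in p1 + p2.
Definition mQ (s : stT) := let: (p1, q1, p2, q2) := s in q1 + q2.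
Definition md (s : stT) := fr (mP s) (mQ s).

Lemma med_facts (p1 q1 p2 q2 : int) : 0 < q1 -> 0 < q2 -> p2 * q1 - p1 * q2 = 1 ->
  fr (p1 + p2) (q1 + q2) - fr p1 q1 = ((q1 * (q1 + q2))%:~R)^-1 /\
  fr p2 q2 - fr (p1 + p2) (q1 + q2) = ((q2 * (q1 + q2))%:~R)^-1.
Proof.
move=> h1 h2 hd.
have hd' : p2%:~R * q1%:~R - p1%:~R * q2%:~R = 1 :> R.
  by rewrite -!intrM -intrB hd.
have n1 : q1%:~R != 0 :> R by rewrite intr_eq0 gt_eqF.
have n2 : q2%:~R != 0 :> R by rewrite intr_eq0 gt_eqF.
have n3 : (q1 + q2)%:~R != 0 :> R by rewrite intr_eq0 gt_eqF // addr_gt0.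
move: n3; rewrite intrD => n3.
rewrite /fr !intrM !intrD.
set P1 := p1%:~R in hd' *; set P2 := p2%:~R in hd' *.
set Q1 := q1%:~R in hd' n1 n3 *; set Q2 := q2%:~R in hd' n2 n3 *.
split.
  transitivity ((P2 * Q1 - P1 * Q2) / (Q1 * (Q1 + Q2))); last by rewrite hd' div1r.
  by field; rewrite n1 n3.
transitivity ((P2 * Q1 - P1 * Q2) / (Q2 * (Q1 + Q2))); last by rewrite hd' div1r.
by field; rewrite n2 n3.
Qed.

Lemma Inv_init : Inv init.
Proof.
rewrite /Inv /init; split => //; first lia.
by rewrite /fr !divr1; exact: floor_itv.
Qed.

Lemma Inv_step s : Inv s -> Inv (step s).
Proof.
case: s => [[[p1 q1] p2] q2] [h1 h2 hd /andP [hl hr]] /=.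
case: ifP => hm; split => //; try lia; by rewrite ?hm ?hl ?hr //= ltNge hm.
Qed.

Lemma Inv_st n : Inv (st n).
Proof. elim: n => [|n IH]; [exact: Inv_init | exact: Inv_step]. Qed.

Lemma mQ_ge n : (n%:Z + 2 <= mQ (st n))%R.
Proof.
elim: n => [|n IH] //=.
have := Inv_st n; rewrite /st in IH *.
case: (iter n step init) IH => [[[p1 q1] p2] q2] /= IH [h1 h2 hd _].
case: ifP => _ /=; lia.
Qed.

Lemma md_in s : Inv s -> lo s < md s < hi s.
Proof.
case: s => [[[p1 q1] p2] q2] [h1 h2 hd _] /=.
have [e1 e2] := med_facts h1 h2 hd.
have g1 : 0 < ((q1 * (q1 + q2))%:~R : R)^-1 by rewrite invr_gt0 ltr0z; nia.
have g2 : 0 < ((q2 * (q1 + q2))%:~R : R)^-1 by rewrite invr_gt0 ltr0z; nia.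
rewrite /md /=; apply/andP; split; lra.
Qed.

Lemma md_close s : Inv s -> `|md s - r| <= ((mQ s)%:~R)^-1.
Proof.
case: s => [[[p1 q1] p2] q2] [h1 h2 hd /andP [hl hr]] /=.
have [e1 e2] := med_facts h1 h2 hd.
rewrite /md /=.
have hQ : (0 : R) < (q1 + q2)%:~R by rewrite ltr0z; lia.
have b1 : ((q1 * (q1 + q2))%:~R : R)^-1 <= ((q1 + q2)%:~R)^-1.
  rewrite lef_pV2 ?posrE ?ltr0z ?ler_int; nia.
have b2 : ((q2 * (q1 + q2))%:~R : R)^-1 <= ((q1 + q2)%:~R)^-1.
  rewrite lef_pV2 ?posrE ?ltr0z ?ler_int; nia.
rewrite ler_norml; apply/andP; split; lra.
Qed.

Lemma step_nest s : Inv s -> lo s <= lo (step s) /\ hi (step s) <= hi s /\ (md s = lo (step s) \/ md s = hi (step s)).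
Proof.
move=> hs; have := md_in hs.
case: s hs => [[[p1 q1] p2] q2] hs; rewrite /lo /hi /md /mP /mQ /step /= => /andP [m1 m2].
case: ifP => _ /=; split; try lra; split; try lra; by [left | right].
Qed.

Lemma nest_far n m : (n < m)%N -> lo (st n.+1) <= lo (st m) /\ hi (st m) <= hi (st n.+1).
Proof.
elim: m => [//|m IH] hnm.
case: (ltngtP n m) => h; last first.
- by subst; split.
- lia.
have [a1 a2] := IH h.
have [b1 [b2 _]] := step_nest (Inv_st m).
by rewrite /st iterS -/(st m); split; lra.
Qed.

Lemma md_inj : injective (fun n => md (st n)).
Proof.
suff H : forall n m, (n < m)%N -> md (st n) != md (st m).
  move=> n m /= E; case: (ltngtP n m) => // h.
    by move: (H _ _ h); rewrite E eqxx.
  by move: (H _ _ h); rewrite E eqxx.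
move=> n m hnm.
have [a1 a2] := nest_far hnm.
have /andP [c1 c2] := md_in (Inv_st m).
have [_ [_ hb]] := step_nest (Inv_st n).
rewrite /st iterS -/(st n) in a1 a2.
apply/eqP => E; case: hb => hb; lra.
Qed.

Lemma coprime_m s : Inv s -> coprime `|mP s| `|mQ s|.
Proof.
case: s => [[[p1 q1] p2] q2] [h1 h2 hd _] /=.
rewrite -coprimezE; apply/coprimezP; exists (q1, - p1) => /=; lia.
Qed.

End Med.

Section Approx.
Variable R : realType.

Lemma approx_seq (r : R) : exists X : nat -> rat, injective X /\
  (forall e : R, 0 < e -> exists N, forall n, (N <= n)%N -> `|ratr (X n) - r| < e) /\
  (forall n, (denq (X n))%:~R * `|ratr (X n) - r| <= 1).
Proof.
pose X n : rat := (mP (st r n))%:~R / (mQ (st r n))%:~R.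
have hX : forall n, ratr (X n) = md R (st r n).
  by move=> n; rewrite /X rmorphM fmorphV !rmorph_int.
have hQ : forall n, (0 : R) < (mQ (st r n))%:~R.
  move=> n; have := mQ_ge r n; rewrite ltr0z; lia.
exists X; split; [|split].
- move=> n m E; apply: (md_inj (r := r)) => /=.
  by rewrite -!hX E.
- move=> e he.
  exists (Num.Def.archi_bound e^-1) => n hn; rewrite hX.
  apply: (le_lt_trans (md_close (Inv_st r n))).
  rewrite -[e]invrK ltf_pV2 ?posrE ?invr_gt0 //.
  have hb : e^-1 < (Num.Def.archi_bound e^-1)%:R.
    by apply: archi_boundP; rewrite invr_ge0 ltW.
  have hn' : ((Num.Def.archi_bound e^-1)%:R : R) <= n%:R by rewrite ler_nat.
  have hq : (n%:R : R) + 2 <= (mQ (st r n))%:~R.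
    have := mQ_ge r n; rewrite -(ler_int R) intrD; exact.
  lra.
- move=> n; rewrite hX /X coprimeq_den ?coprime_m ?Inv_st //.
  rewrite gt_eqF; last by have := hQ n; rewrite ltr0z.
  rewrite gtr0_norm; last by have := hQ n; rewrite ltr0z.
  have := md_close (Inv_st r n); have := hQ n.
  set q := (mQ (st r n))%:~R; set d := `|_ - _| => hq hd.
  rewrite -(divff (negbT (gt_eqF hq))); apply: ler_wpM2l => //; exact: ltW.
by apply: coprime_m; apply: Inv_st.
Qed.

End Approx.

Section Fin.
Variable R : realType.

Lemma pigeon (X : nat -> option rat) : injective X -> forall (N : nat) (D : R),
  (forall n, (N <= n)%N -> X n = None \/
     exists x, X n = Some x /\ (denq x)%:~R <= D /\ `|(numq x)%:~R| <= D) -> False.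
Proof.
move=> hX N D hD.
pose Dn := Num.Def.archi_bound `|D|.
have hDn : D < Dn%:R.
  by apply: le_lt_trans (ler_norm D) _; apply: archi_boundP.
pose zs := [seq (k%:Z - Dn%:Z) | k <- iota 0 (2 * Dn).+1].
have zs_in : forall z : int, `|z| <= Dn%:Z -> z \in zs.
  move=> z hz; apply/mapP; exists (absz (z + Dn%:Z)); last by lia.
  by rewrite mem_iota; lia.
pose S := None :: [seq Some ((i%:~R : rat) / (j%:~R)) | i <- zs, j <- zs].
have inS : forall n, (N <= n)%N -> X n \in S.
  move=> n hn; case: (hD n hn) => [->|[x [-> [h1 h2]]]]; first by rewrite in_cons eqxx.
  rewrite in_cons; apply/orP; right.
  rewrite -[x]divq_num_den.
  apply: (allpairs_f (fun i j => Some ((i%:~R : rat) / j%:~R))); apply: zs_in.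
    have : `|(numq x)%:~R| < (Dn%:R : R) by apply: le_lt_trans h2 hDn.
    rewrite -intr_norm -[Dn%:R]/((Dn%:Z)%:~R) ltr_int; lia.
  have : ((denq x)%:~R : R) < Dn%:R by apply: le_lt_trans h1 hDn.
  rewrite -[Dn%:R]/((Dn%:Z)%:~R) ltr_int => h; have := denq_gt0 x; lia.
have u : uniq (map X (iota N (size S).+1)) by rewrite map_inj_uniq // iota_uniq.
have sub : {subset map X (iota N (size S).+1) <= S}.
  move=> y /mapP [n]; rewrite mem_iota => /andP [h1 _] ->; exact: inS.
by have := uniq_leq_size u sub; rewrite size_map size_iota ltnn.
Qed.

End Fin.

Section Main.
Variable R : realType.
Local Notation C := (R[i]).
Local Notation nc := (@ComplexField.Normc.normc R).
Variables (T : curve -> C) (la lb : R).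
Hypothesis T1 : forall c, in_m22 (T c) <-> xv la lb c = 0.
Hypothesis T2 : forall c K, nc (T c) < K -> `|xv la lb c| < ln (K + 1).
Hypothesis T3 : forall c M, `|xv la lb c| <= M -> nc (T c) < 2 * expR M + 1.

Definition endinv (L : PL R) := exists K : R, 0 < K /\
  exists X : nat -> curve, injective X /\
    cvg_hat (fun n => curve_to_PL (X n)) L /\
    forall n : nat, nc (T (X n)) < K.

Lemma denq_R (q : rat) : (0 : R) < (denq q)%:~R.
Proof. by rewrite ltr0z denq_gt0. Qed.

Lemma numq_R (q : rat) : ((numq q)%:~R : R) = (denq q)%:~R * ratr q.
Proof.
rewrite /ratr; have h := denq_R q; field; exact: (negbT (gt_eqF h)).
Qed.

Lemma xv_some q : xv la lb (Some q) = (denq q)%:~R * (la + lb * ratr q).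
Proof. by rewrite /= numq_R; ring. Qed.

Lemma endinv_some r M : (forall q : rat, (denq q)%:~R * `|ratr q - r| <= 1 ->
  `|xv la lb (Some q)| <= M) -> endinv (Some r).
Proof.
move=> hM; have [X [hinj [hcv hb]]] := approx_seq r.
exists (2 * expR M + 1); split; first by have := expR_gt0 M; lra.
exists (fun n => Some (X n)); split; first by move=> n m [] /hinj.
split; last by move=> n; apply: T3; apply: hM; apply: hb.
move=> e he; have [N hN] := hcv e he; exists N => n hn.
by exists (ratr (X n)); split => //; apply: hN.
Qed.

Lemma endinv_none M : (forall n : nat, `|xv la lb (Some n%:R)| <= M) -> endinv None.
Proof.
move=> hM; exists (2 * expR M + 1); split; first by have := expR_gt0 M; lra.
exists (fun n : nat => Some (n%:R : rat)); split.
  by move=> n m [] /eqP; rewrite eqr_nat => /eqP.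
split; last by move=> n; apply: T3; apply: hM.
move=> M'; exists (Num.Def.archi_bound `|M'|) => n hn x [<-].
rewrite ratr_nat ger0_norm ?ler0n //.
apply: le_lt_trans (ler_norm M') _; apply: lt_le_trans (archi_boundP (normr_ge0 M')) _.
by rewrite ler_nat.
Qed.

Lemma norm_rx (x r : R) : `|x - r| < 1 -> `|x| <= `|r| + 1.
Proof.
move=> h; have := ler_normD (x - r) r; rewrite subrK => h2; lra.
Qed.

Lemma contra_fin (Xs : nat -> curve) M (r : R) c : injective Xs ->
  (forall n, `|xv la lb (Xs n)| < M) -> 0 < c ->
  (exists N, forall n, (N <= n)%N -> exists x, Xs n = Some x /\
      `|ratr x - r| < 1 /\ c <= `|la + lb * ratr x|) -> False.
Proof.
move=> hinj hM hc [N hN].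
apply: (pigeon hinj (N := N) (D := M / c * (`|r| + 1) + M / c)) => n hn.
right; have [x [hx [h1 h2]]] := hN n hn; exists x; split => //.
have hb := hM n; rewrite hx xv_some normrM (gtr0_norm (denq_R x)) in hb.
have hq : 0 < ((denq x)%:~R : R) := denq_R x.
set q := ((denq x)%:~R : R) in hb hq *.
have hqQ : q <= M / c.
  rewrite ler_pdivlMr //; apply: le_trans (ltW hb); apply: ler_wpM2l; lra.
have hQ0 : 0 <= M / c by lra.
have hr0 : 0 <= `|r| + 1 by have := normr_ge0 r; lra.
have hQr : 0 <= M / c * (`|r| + 1) by apply: mulr_ge0.
split; first lra.
rewrite numq_R normrM (gtr0_norm hq).
have := norm_rx h1 => hx1.
have : q * `|ratr x| <= M / c * (`|r| + 1) by apply: ler_pM => //; apply: ltW.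
lra.
Qed.

Lemma contra_inf (Xs : nat -> curve) M : injective Xs -> lb != 0 ->
  (forall n, `|xv la lb (Xs n)| < M) ->
  (forall M' : R, exists N, forall n, (N <= n)%N -> forall x, Xs n = Some x -> M' < `|(ratr x : R)|) ->
  False.
Proof.
move=> hinj hlb hM hcv.
have hlb0 : 0 < `|lb| by rewrite normr_gt0.
have [N hN] := hcv ((`|la| + 1) / `|lb|).
apply: (pigeon hinj (N := N) (D := M + (M + M * `|la|) / `|lb|)) => n hn.
case E: (Xs n) => [x|]; last by left.
right; exists x; split => //.
have h1 := hN n hn x E.
have hb := hM n; rewrite E xv_some normrM (gtr0_norm (denq_R x)) in hb.
have hq : 0 < ((denq x)%:~R : R) := denq_R x.
set q := ((denq x)%:~R : R) in hb hq *.
set y := ratr x in h1 hb *.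
have hy : `|la| + 1 < `|lb| * `|y| by rewrite -ltr_pdivrMl // mulrC.
have htri : `|lb| * `|y| - `|la| <= `|la + lb * y|.
  have := ler_normD (la + lb * y) (- la); rewrite addrC addKr normrN normrM; lra.
have hq1 : q * 1 < M.
  apply: le_lt_trans hb; apply: le_trans (_ : q * (`|lb| * `|y| - `|la|) <= _).
    by apply: ler_wpM2l; lra.
  by apply: ler_wpM2l; lra.
have hM0 : 0 <= M by lra.
have hqy : q * (`|lb| * `|y|) <= M + M * `|la|.
  have : q * (`|lb| * `|y| - `|la|) <= M by apply: le_trans (ltW hb); apply: ler_wpM2l; lra.
  have : q * `|la| <= M * `|la| by apply: ler_wpM2r; [exact: normr_ge0 | lra].
  rewrite mulrBr; lra.
have hD0 : 0 <= (M + M * `|la|) / `|lb|.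
  by apply: divr_ge0; [have := normr_ge0 la; nra | lra].
split; first lra.
rewrite numq_R normrM (gtr0_norm hq) -/y.
have : q * `|y| <= (M + M * `|la|) / `|lb|.
  rewrite ler_pdivlMr // -mulrA [`|y| * _]mulrC; exact: hqy.
lra.
Qed.

Lemma ratr_inj : injective (ratr : rat -> R).
Proof.
move=> x y E; apply/eqP; rewrite eq_le; apply/andP; split; by rewrite -(ler_rat R) E.
Qed.

Lemma curve_to_PL_inj : injective (@curve_to_PL R).
Proof. by case=> [x|] [y|] //= [] /ratr_inj ->. Qed.

Definition X0 : PL R := if lb != 0 then Some (- la / lb) else None.

Lemma zero_char : ~ (la = 0 /\ lb = 0) -> forall c, xv la lb c = 0 <-> curve_to_PL c = X0.
Proof.
move=> hnz [q|]; rewrite /X0; last first.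
  case: (eqVneq lb 0) => [->|hlb] /=; first by [].
  by split => // h; rewrite h eqxx in hlb.
rewrite xv_some /=; have hq := denq_R q.
have -> : ((denq q)%:~R * (la + lb * ratr q) = 0) <-> (la + lb * ratr q = 0).
  split => [/eqP|->]; last by rewrite mulr0.
  by rewrite mulf_eq0 (gt_eqF hq) /= => /eqP.
case: (eqVneq lb 0) => hlb /=.
  rewrite hlb mul0r addr0; split => // ha; exfalso; exact: hnz.
split => [h|[->]]; last by field.
congr Some; apply/eqP; rewrite -subr_eq0; apply/eqP.
transitivity ((la + lb * ratr q) / lb); first by field.
by rewrite h mul0r.
Qed.

Lemma main_abstract :
  (exists X0 : PL R,
     (forall L : PL R, endinv L <-> L = X0) /\
     (forall c0 : curve, curve_to_PL c0 = X0 ->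
        in_m22 (T c0) /\
        forall c : curve, c <> c0 -> ~ in_m22 (T c)) /\
     ((forall c : curve, curve_to_PL c <> X0) ->
        forall c : curve, ~ in_m22 (T c)))
  \/
  ((forall L : PL R, endinv L) /\
   forall c : curve, in_m22 (T c)).
Proof.
case: (boolP ((la == 0) && (lb == 0))) => hz.
  right; move/andP: hz => [/eqP ha /eqP hb].
  have x0 : forall c, xv la lb c = 0 by case => [q|] /=; rewrite ?ha ?hb //; ring.
  split; last by move=> c; apply/T1.
  case => [r|]; [apply: (endinv_some (M := 0)) | apply: (endinv_none (M := 0))];
    by move=> *; rewrite x0 normr0.
left; have hnz : ~ (la = 0 /\ lb = 0).
  by move=> [ha hb]; move: hz; rewrite ha hb eqxx.
have zc := zero_char hnz.
exists X0; split; [|split].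
- move=> L; split; last first.
    move=> ->; rewrite /X0; case: (eqVneq lb 0) => hlb /=.
      apply: (endinv_none (M := `|la|)) => n.
      have hd1 : denq (n%:R : rat) = 1 := denq_int n.
      by rewrite /= hlb mulr0 addr0 hd1 mul1r.
    apply: (endinv_some (M := `|lb|)) => q hq.
    rewrite xv_some.
    have -> : la + lb * ratr q = lb * (ratr q - - la / lb) by field.
    rewrite !normrM (gtr0_norm (denq_R q)) mulrCA.
    by rewrite -[X in _ <= X]mulr1 ler_wpM2l.
  move=> [K [hK [Xs [hinj [hcv hb]]]]].
  have hM : forall n, `|xv la lb (Xs n)| < ln (K + 1) by move=> n; apply: T2; apply: hb.
  case: L hcv => [r|] hcv; last first.
    rewrite /X0; case: (eqVneq lb 0) => hlb //=; exfalso.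
    apply: (contra_inf hinj hlb hM) => M'; have [N hN] := hcv M'.
    by exists N => n hn x E; apply: (hN n hn); rewrite E.
  rewrite /X0; case: (eqVneq lb 0) => hlb /=.
    exfalso; have hla : la != 0 by apply/eqP => ha; exact: hnz.
    apply: (contra_fin hinj hM (r := r) (c := `|la|)); first by rewrite normr_gt0.
    have [N hN] := hcv 1 ltr01; exists N => n hn.
    have [y [hy1 hy2]] := hN n hn.
    case E: (Xs n) hy1 => [x|] //= [hxy]; exists x; split => //.
    by rewrite hxy hlb mul0r addr0.
  set r0 := - la / lb.
  case: (eqVneq r r0) => [->//|hr]; exfalso.
  have hd : 0 < `|r - r0| by rewrite normr_gt0 subr_eq0.
  set d := `|r - r0| in hd.
  have he : 0 < Num.min 1 (d / 2) by rewrite lt_min ltr01 /=; lra.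
  have hlb0 : 0 < `|lb| by rewrite normr_gt0.
  apply: (contra_fin hinj hM (r := r) (c := `|lb| * (d / 2))).
    by apply: mulr_gt0 => //; lra.
  have [N hN] := hcv _ he; exists N => n hn.
  have [y [hy1 hy2]] := hN n hn.
  case E: (Xs n) hy1 => [x|] //= [hxy]; exists x; rewrite hxy; split => //.
  move: hy2; rewrite lt_min => /andP [hy2 hy3]; split => //.
  have -> : la + lb * y = lb * (y - r0) by rewrite /r0; field.
  rewrite normrM; apply: ler_wpM2l; first exact: normr_ge0.
  have := ler_normD (y - r0) (r - y).
  have -> : y - r0 + (r - y) = r - r0 by ring.
  rewrite (distrC r y) -/d; lra.
- move=> c0 hc0; split; first by apply/T1/zc.
  move=> c hc /T1 /zc; rewrite -hc0 => E; apply: hc; exact: curve_to_PL_inj E.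
- by move=> hno c /T1 /zc; apply: hno.
Qed.

End Main.

Unset Implicit Arguments. Set Strict Implicit.

Theorem theorem1p3 (R : realType) (A B : 'M[R[i]]_2) :
  is_SL2 A -> is_SL2 B -> comm_trace A B = 2 ->
  (exists X0 : PL R,
     (forall L : PL R, end_invariant A B L <-> L = X0) /\
     (forall c0 : curve, curve_to_PL c0 = X0 ->
        in_m22 (trc A B c0) /\
        forall c : curve, c <> c0 -> ~ in_m22 (trc A B c)) /\
     ((forall c : curve, curve_to_PL c <> X0) ->
        forall c : curve, ~ in_m22 (trc A B c)))
  \/
  ((forall L : PL R, end_invariant A B L) /\
   forall c : curve, in_m22 (trc A B c)).
Proof.
rewrite /is_SL2 /comm_trace => hA hB ht.
have [w [hw [[l hl] [m hm]]]] := common_eig hA hB ht.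
have hl0 := eig_nz hw hl hA; have hm0 := eig_nz hw hm hB.
have hc := curve_facts hA hB hw hl hm.
have htr : forall c, trc A B c = nu l m c + (nu l m c)^-1 /\ nu l m c != 0.
  move=> c; have [e d] := hc c; split; [exact: trace_eig hw e d | exact: eig_nz hw e d].
have T1 : forall c, in_m22 (trc A B c) <->
    xv (ln (ComplexField.Normc.normc l)) (ln (ComplexField.Normc.normc m)) c = 0.
  move=> c; have [-> hn] := htr c; rewrite m22_iff // -ln_nc_nu //.
  have hp := nc_gt0 hn.
  split => [->|h]; first by rewrite ln1.
  by apply/eqP; rewrite -ln_eq0 // h.
have T2 : forall c K, ComplexField.Normc.normc (trc A B c) < K ->
    `|xv (ln (ComplexField.Normc.normc l)) (ln (ComplexField.Normc.normc m)) c| < ln (K + 1).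
  move=> c K; have [-> hn] := htr c; rewrite -ln_nc_nu //; exact: tr_bound_lo.
have T3 : forall c M,
    `|xv (ln (ComplexField.Normc.normc l)) (ln (ComplexField.Normc.normc m)) c| <= M ->
    ComplexField.Normc.normc (trc A B c) < 2 * expR M + 1.
  move=> c M; have [-> hn] := htr c; rewrite -ln_nc_nu //; exact: tr_bound_hi.
exact: (main_abstract T1 T2 T3).
Qed.
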